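(* Let $f:E\to\mathbb{R}$ be $L$-smooth (convexity of $f$ is not assumed), let $x^0\in E$, and consider the iterates of Algorithm AGMsDR (with either Option (a) or Option (b) used at every iteration). Then for every $k\ge 0$, $$A_k f(x^k)\le \min_{x\in E}\psi_k(x)=\psi_k(v^k),$$ and moreover $A_k\ge \frac{k^2}{4L}$.
   Context: $E$ is a finite-dimensional real vector space with a norm $\|\cdot\|$; $E^*$ is its dual, $\langle g,x\rangle$ denotes the value of $g\in E^*$ at $x\in E$, and $\|g\|_*=\max\{\langle g,x\rangle:\|x\|\le 1\}$. For $g\in E^*$, $g^{\#}$ denotes a (fixed) element $s\in E$ with $\|s\|\le 1$ and $\langle g,s\rangle=\|g\|_*$. A prox-function $d:E\to\mathbb{R}$ is continuously differentiable, convex, $1$-strongly convex with respect to $\|\cdot\|$ (i.e. $d(y)-d(x)-\langle\nabla d(x),y-x\rangle\ge\frac12\|y-x\|^2$ for all $x,y\in E$) and satisfies $\min_E d=0$; its Bregman divergence is $V(x,z)=d(x)-d(z)-\langle\nabla d(z),x-z\rangle$. A function $f:E\to\mathbb{R}$ is $L$-smooth ($L>0$) if it is continuously differentiable and $\|\nabla f(x)-\nabla f(y)\|_*\le L\|x-y\|$ for all $x,y\in E$. Algorithm AGMsDR (input $x^0\in E$, and $L$ for Option (a)): set $A_0=0$, $v^0=x^0$, $\psi_0(x)=V(x,x^0)$. For $k=0,1,2,\dots$: 1. Choose $\beta_k\in\arg\min_{\beta\in[0,1]} f(v^k+\beta(x^k-v^k))$ (a global minimizer over the interval) and set $y^k=v^k+\beta_k(x^k-v^k)$.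 2. Option (a): $x^{k+1}\in\arg\min_{x\in E}\{f(y^k)+\langle\nabla f(y^k),x-y^k\rangle+\frac L2\|x-y^k\|^2\}$, and $a_{k+1}>0$ solves $\frac{a_{k+1}^2}{A_k+a_{k+1}}=\frac1L$. Option (b): $h_{k+1}\in\arg\min_{h\ge0} f(y^k-h(\nabla f(y^k))^{\#})$, $x^{k+1}=y^k-h_{k+1}(\nabla f(y^k))^{\#}$, and $a_{k+1}$ is the largest solution of $f(y^k)-\frac{a_{k+1}^2}{2(A_k+a_{k+1})}\|\nabla f(y^k)\|_*^2=f(x^{k+1})$. 3. $A_{k+1}=A_k+a_{k+1}$; $\psi_{k+1}(x)=\psi_k(x)+a_{k+1}\{f(y^k)+\langle\nabla f(y^k),x-y^k\rangle\}$; $v^{k+1}=\arg\min_{x\in E}\psi_{k+1}(x)$. It is assumed that all the minima in the algorithm are attained, and that $\nabla f(y^k)\neq 0$ for all iterations considered (otherwise $y^k$ is a stationary point and the method stops). *)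

(* Defs.v *)
(* classical reals. E is modelled as R^n = (Fin.t n -> R);
   its dual E^* is identified with R^n via the standard pairing <g,x> = sum g_i x_i. *)
From Stdlib Require Import Reals Lra Classical ClassicalEpsilon FunctionalExtensionality.
From Stdlib Require Vectors.Fin.
Open Scope R_scope.

Definition Vec (n : nat) : Type := Fin.t n -> R.

Definition vadd {n} (x y : Vec n) : Vec n := fun i => x i + y i.
Definition vsub {n} (x y : Vec n) : Vec n := fun i => x i - y i.
Definition vscal {n} (c : R) (x : Vec n) : Vec n := fun i => c * x i.
Definition vzero {n} : Vec n := fun _ => 0.

Fixpoint pair (n : nat) : Vec n -> Vec n -> R :=
  match n return Vec n -> Vec n -> R with
  | O => fun _ _ => 0
  | S m => fun g x => g Fin.F1 * x Fin.F1
                      + pair m (fun i => g (Fin.FS i)) (fun i => x (Fin.FS i))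
  end.

Definition is_norm {n} (N : Vec n -> R) : Prop :=
  (forall x, 0 <= N x) /\
  (forall x, N x = 0 -> x = vzero) /\
  (forall c x, N (vscal c x) = Rabs c * N x) /\
  (forall x y, N (vadd x y) <= N x + N y).

Definition dual_set {n} (N : Vec n -> R) (g : Vec n) : R -> Prop :=
  fun r => exists x, N x <= 1 /\ r = pair n g x.

Definition dnorm {n} (N : Vec n -> R) (g : Vec n) : R :=
  epsilon (inhabits 0) (fun r => is_lub (dual_set N g) r).

Definition is_sharp {n} (N : Vec n -> R) (sharp : Vec n -> Vec n) : Prop :=
  forall g, N (sharp g) <= 1 /\ pair n g (sharp g) = dnorm N g.

Definition has_gradient {n} (N : Vec n -> R) (f : Vec n -> R) (g : Vec n) (x : Vec n) : Prop :=
  forall eps, 0 < eps -> exists delta, 0 < delta /\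
    forall h, N h < delta ->
      Rabs (f (vadd x h) - f x - pair n g h) <= eps * N h.

Definition C1 {n} (N : Vec n -> R) (f : Vec n -> R) (gf : Vec n -> Vec n) : Prop :=
  (forall x, has_gradient N f (gf x) x) /\
  (forall x eps, 0 < eps -> exists delta, 0 < delta /\
     forall y, N (vsub y x) < delta -> dnorm N (vsub (gf y) (gf x)) < eps).

Definition L_smooth {n} (N : Vec n -> R) (L : R) (f : Vec n -> R) (gf : Vec n -> Vec n) : Prop :=
  0 < L /\ C1 N f gf /\
  forall x y, dnorm N (vsub (gf x) (gf y)) <= L * N (vsub x y).

Definition convex_fun {n} (d : Vec n -> R) : Prop :=
  forall x y t, 0 <= t <= 1 ->
    d (vadd (vscal t x) (vscal (1 - t) y)) <= t * d x + (1 - t) * d y.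

Definition prox_function {n} (N : Vec n -> R) (d : Vec n -> R) (gd : Vec n -> Vec n) : Prop :=
  C1 N d gd /\ convex_fun d /\
  (forall x y, d y - d x - pair n (gd x) (vsub y x) >= / 2 * (N (vsub y x)) ^ 2) /\
  (exists z, d z = 0) /\ (forall z, 0 <= d z).

Definition bregman {n} (d : Vec n -> R) (gd : Vec n -> Vec n) (x z : Vec n) : R :=
  d x - d z - pair n (gd z) (vsub x z).

Fixpoint psi {n} (d : Vec n -> R) (gd : Vec n -> Vec n) (f : Vec n -> R) (gf : Vec n -> Vec n)
  (x0 : Vec n) (a : nat -> R) (y : nat -> Vec n) (k : nat) (x : Vec n) : R :=
  match k with
  | O => bregman d gd x x0
  | S j => psi d gd f gf x0 a y j x
           + a (S j) * (f (y j) + pair n (gf (y j)) (vsub x (y j)))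
  end.

Inductive step_option : Type := OptionA | OptionB.

(* The sequences x, v, y, beta, h, a, A are iterates of AGMsDR started at x0,
   using the option opt at every iteration. a (S k) = a_{k+1}, h (S k) = h_{k+1}. *)
Definition AGMsDR_iterates {n} (N : Vec n -> R) (sharp : Vec n -> Vec n) (L : R)
  (f : Vec n -> R) (gf : Vec n -> Vec n) (d : Vec n -> R) (gd : Vec n -> Vec n)
  (opt : step_option) (x0 : Vec n)
  (x v y : nat -> Vec n) (beta h a A : nat -> R) : Prop :=
  x 0%nat = x0 /\ v 0%nat = x0 /\ A 0%nat = 0 /\
  forall k : nat,
    (0 <= beta k <= 1 /\
     (forall b, 0 <= b <= 1 ->
        f (vadd (v k) (vscal (beta k) (vsub (x k) (v k))))
        <= f (vadd (v k) (vscal b (vsub (x k) (v k))))) /\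
     y k = vadd (v k) (vscal (beta k) (vsub (x k) (v k)))) /\
    match opt with
    | OptionA =>
        (forall z,
           f (y k) + pair n (gf (y k)) (vsub (x (S k)) (y k))
             + L / 2 * (N (vsub (x (S k)) (y k))) ^ 2
           <= f (y k) + pair n (gf (y k)) (vsub z (y k))
             + L / 2 * (N (vsub z (y k))) ^ 2) /\
        0 < a (S k) /\ (a (S k)) ^ 2 / (A k + a (S k)) = / L
    | OptionB =>
        let s := sharp (gf (y k)) in
        (0 <= h (S k) /\
         (forall h', 0 <= h' ->
            f (vsub (y k) (vscal (h (S k)) s)) <= f (vsub (y k) (vscal h' s))) /\
         x (S k) = vsub (y k) (vscal (h (S k)) s)) /\
        (A k + a (S k) <> 0 /\
         f (y k) - (a (S k)) ^ 2 / (2 * (A k + a (S k))) * (dnorm N (gf (y k))) ^ 2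
           = f (x (S k)) /\
         forall a', A k + a' <> 0 ->
           f (y k) - a' ^ 2 / (2 * (A k + a')) * (dnorm N (gf (y k))) ^ 2 = f (x (S k)) ->
           a' <= a (S k))
    end /\
    A (S k) = A k + a (S k) /\
    (forall z, psi d gd f gf x0 a y (S k) (v (S k)) <= psi d gd f gf x0 a y (S k) z).

(* Main.v *)
Require Import Defs.
From Stdlib Require Import Reals.
From Stdlib Require Import Lra Lia Classical ClassicalEpsilon FunctionalExtensionality ZArith.
From Stdlib Require Vectors.Fin.
Open Scope R_scope.


Definition vtl {n} (x : Vec (S n)) : Vec n := fun i => x (Fin.FS i).
Definition vcons {n} (c : R) (u : Vec n) : Vec (S n) :=
  fun i => Fin.caseS' i (fun _ => R) c u.

Lemma vcons_F1 n c (u : Vec n) : vcons c u Fin.F1 = c.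
Proof. reflexivity. Qed.
Lemma vcons_FS n c (u : Vec n) j : vcons c u (Fin.FS j) = u j.
Proof. reflexivity. Qed.

Lemma vec_eta n (x : Vec (S n)) : x = vcons (x Fin.F1) (vtl x).
Proof.
  apply functional_extensionality; intro i.
  pattern i; apply Fin.caseS'; reflexivity.
Qed.

Lemma pair_scal_r n : forall g x c, pair n g (vscal c x) = c * pair n g x.
Proof.
  induction n; intros g x c; simpl; [ring|].
  specialize (IHn (fun i => g (Fin.FS i)) (fun i => x (Fin.FS i)) c). unfold vscal in *; cbv beta in *; rewrite IHn. ring.
Qed.
Lemma pair_scal_l n : forall g x c, pair n (vscal c g) x = c * pair n g x.
Proof.
  induction n; intros g x c; simpl; [ring|].
  specialize (IHn (fun i => g (Fin.FS i)) (fun i => x (Fin.FS i)) c). unfold vscal in *; cbv beta in *; rewrite IHn. ring.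
Qed.
Lemma pair_add_r n : forall g x y, pair n g (vadd x y) = pair n g x + pair n g y.
Proof.
  induction n; intros g x y; simpl; [ring|].
  specialize (IHn (fun i => g (Fin.FS i)) (fun i => x (Fin.FS i)) (fun i => y (Fin.FS i))). unfold vadd in *; cbv beta in *; rewrite IHn. ring.
Qed.
Lemma pair_add_l n : forall g g' x, pair n (vadd g g') x = pair n g x + pair n g' x.
Proof.
  induction n; intros g g' x; simpl; [ring|].
  specialize (IHn (fun i => g (Fin.FS i)) (fun i => g' (Fin.FS i)) (fun i => x (Fin.FS i))). unfold vadd in *; cbv beta in *; rewrite IHn. ring.
Qed.
Lemma pair_sub_r n : forall g x y, pair n g (vsub x y) = pair n g x - pair n g y.
Proof.
  induction n; intros g x y; simpl; [ring|].
  specialize (IHn (fun i => g (Fin.FS i)) (fun i => x (Fin.FS i)) (fun i => y (Fin.FS i))). unfold vsub in *; cbv beta in *; rewrite IHn. ring.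
Qed.
Lemma pair_sub_l n : forall g g' x, pair n (vsub g g') x = pair n g x - pair n g' x.
Proof.
  induction n; intros g g' x; simpl; [ring|].
  specialize (IHn (fun i => g (Fin.FS i)) (fun i => g' (Fin.FS i)) (fun i => x (Fin.FS i))). unfold vsub in *; cbv beta in *; rewrite IHn. ring.
Qed.
Lemma pair_zero_r n : forall g, pair n g vzero = 0.
Proof.
  induction n; intros g; simpl; [ring|].
  specialize (IHn (fun i => g (Fin.FS i))). unfold vzero in *; cbv beta in *; rewrite IHn. ring.
Qed.
Lemma pair_self_nonneg n : forall g, 0 <= pair n g g.
Proof.
  induction n; intros g; simpl; [lra|].
  specialize (IHn (fun i => g (Fin.FS i))). nra.
Qed.
Lemma pair_self_zero n : forall g, pair n g g = 0 -> g = vzero.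
Proof.
  induction n; intros g H.
  - apply functional_extensionality; intro i; apply Fin.case0; exact i.
  - simpl in H. pose proof (pair_self_nonneg n (fun i => g (Fin.FS i))).
    assert (H1 : g Fin.F1 = 0) by nra.
    assert (H2 : pair n (fun i => g (Fin.FS i)) (fun i => g (Fin.FS i)) = 0) by nra.
    apply IHn in H2.
    apply functional_extensionality; intro i. pattern i; apply Fin.caseS'.
    + exact H1.
    + intro j. exact (f_equal (fun u => u j) H2).
Qed.

Fixpoint sumabs (n : nat) : Vec n -> R :=
  match n return Vec n -> R with
  | O => fun _ => 0
  | S m => fun g => Rabs (g Fin.F1) + sumabs m (fun i => g (Fin.FS i))
  end.

Lemma pair_bound n : forall g x M, (forall i, Rabs (x i) <= M) -> Rabs (pair n g x) <= sumabs n g * M.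
Proof.
  induction n; intros g x M H; simpl.
  - rewrite Rabs_R0; lra.
  - specialize (IHn (fun i => g (Fin.FS i)) (fun i => x (Fin.FS i)) M (fun i => H (Fin.FS i))).
    pose proof (H Fin.F1).
    eapply Rle_trans; [apply Rabs_triang|]. rewrite Rabs_mult.
    assert (Rabs (g Fin.F1) * Rabs (x Fin.F1) <= Rabs (g Fin.F1) * M) by (apply Rmult_le_compat_l; [apply Rabs_pos|lra]).
    lra.
Qed.

Lemma Rabs_m1 : Rabs (-1) = 1.
Proof. unfold Rabs; destruct Rcase_abs; lra. Qed.
Section NormBasics.
Context {n : nat} (N : Vec n -> R) (HN : is_norm N).

Lemma N_zero : N vzero = 0.
Proof.
  destruct HN as [H0 [H1 [H2 H3]]].
  replace (@vzero n) with (vscal 0 (@vzero n)) by (apply functional_extensionality; intro; unfold vscal, vzero; ring).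
  rewrite H2, Rabs_R0; ring.
Qed.
Lemma N_nonneg x : 0 <= N x.
Proof. apply HN. Qed.
Lemma N_eq0 x : N x = 0 -> x = vzero.
Proof. apply HN. Qed.
Lemma N_scal c x : N (vscal c x) = Rabs c * N x.
Proof. apply HN. Qed.
Lemma N_triang x y : N (vadd x y) <= N x + N y.
Proof. apply HN. Qed.
Lemma N_sub_sym x y : N (vsub x y) = N (vsub y x).
Proof.
  replace (vsub x y) with (vscal (-1) (vsub y x)) by (apply functional_extensionality; intro; unfold vscal, vsub; ring).
  rewrite N_scal, Rabs_m1; ring.
Qed.
Lemma N_sub_triang x y : N (vsub x y) <= N x + N y.
Proof.
  replace (vsub x y) with (vadd x (vscal (-1) y)) by (apply functional_extensionality; intro; unfold vadd, vscal, vsub; ring).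
  eapply Rle_trans; [apply N_triang|]. rewrite N_scal, Rabs_m1; lra.
Qed.
End NormBasics.


Lemma nat_above (r : R) : exists k : nat, r < INR k.
Proof.
  destruct (Rle_or_lt r 0) as [H|H].
  - exists 1%nat; simpl; lra.
  - destruct (archimed r) as [H1 H2].
    assert (Hz : (0 <= up r)%Z) by (apply le_IZR; lra).
    exists (Z.to_nat (up r)). rewrite INR_IZR_INZ, Z2Nat.id by exact Hz; lra.
Qed.

Lemma inv_small (e : R) : 0 < e -> exists k : nat, / (INR k + 1) < e.
Proof.
  intro He. destruct (nat_above (/ e)) as [k Hk]. exists k.
  pose proof (pos_INR k).
  replace e with (/ / e) by (field; lra).
  apply Rinv_lt_contravar; [|lra].
  apply Rmult_lt_0_compat; [apply Rinv_0_lt_compat; lra| lra].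
Qed.

Lemma inv_mono (k m : nat) : (k <= m)%nat -> / (INR m + 1) <= / (INR k + 1).
Proof.
  intro H. apply le_INR in H. pose proof (pos_INR k).
  apply Rinv_le_contravar; lra.
Qed.

Ltac vext := apply functional_extensionality; let i := fresh "i" in intro i;
  pattern i; apply Fin.caseS'; [ | let j := fresh "j" in intro j]; cbn;
  unfold vadd, vsub, vscal, vzero, vcons, vtl; cbn; try ring.

Lemma tail_norm n (N : Vec (S n) -> R) : is_norm N -> is_norm (fun u : Vec n => N (vcons 0 u)).
Proof.
  intro HN. destruct HN as [H0 [H1 [H2 H3]]]. split; [|split; [|split]].
  - intro; apply H0.
  - intros u Hu. apply H1 in Hu. apply functional_extensionality; intro j.
    exact (f_equal (fun z => z (Fin.FS j)) Hu).
  - intros c u. rewrite <- H2. f_equal. vext.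
  - intros u w. replace (vcons 0 (vadd u w)) with (vadd (vcons 0 u) (vcons 0 w)) by vext. apply H3.
Qed.

Lemma norm_upper n : forall N : Vec n -> R, is_norm N ->
  exists K, 0 <= K /\ forall v M, (forall j, Rabs (v j) <= M) -> N v <= K * M.
Proof.
  induction n; intros N HN.
  - exists 0. split; [lra|]. intros v M _.
    replace v with (@vzero 0) by (apply functional_extensionality; intro i; apply Fin.case0; exact i).
    rewrite (N_zero N HN). lra.
  - destruct (IHn _ (tail_norm n N HN)) as [K [HK HKb]].
    exists (N (vcons 1 vzero) + K). split.
    + pose proof (N_nonneg N HN (vcons 1 vzero)). lra.
    + intros v M Hv.
      replace v with (vadd (vscal (v Fin.F1) (vcons 1 vzero)) (vcons 0 (vtl v))) by vext.
      eapply Rle_trans; [apply (N_triang N HN)|]. rewrite (N_scal N HN).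
      specialize (HKb (vtl v) M (fun j => Hv (Fin.FS j))).
      pose proof (Hv Fin.F1). pose proof (N_nonneg N HN (vcons 1 vzero)).
      assert (Rabs (v Fin.F1) * N (vcons 1 vzero) <= M * N (vcons 1 vzero)) by (apply Rmult_le_compat_r; lra).
      lra.
Qed.

Lemma fin_uniform n : forall (P : Fin.t n -> nat -> Prop),
  (forall i k k', (k <= k')%nat -> P i k -> P i k') -> (forall i, exists k, P i k) -> exists k, forall i, P i k.
Proof.
  induction n; intros P Hm He.
  - exists 0%nat. intro i. apply Fin.case0. exact i.
  - destruct (IHn (fun j => P (Fin.FS j))) as [k1 Hk1].
    + intros; eapply Hm; eauto.
    + intro; apply He.
    + destruct (He Fin.F1) as [k0 Hk0]. exists (Nat.max k0 k1). intro i. pattern i; apply Fin.caseS'.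
      * eapply Hm; [|exact Hk0]; lia.
      * intro j. eapply Hm; [|apply Hk1]; lia.
Qed.

Lemma norm_lower n : forall N : Vec n -> R, is_norm N ->
  exists C, 0 < C /\ forall x i, Rabs (x i) <= C * N x.
Proof.
  induction n; intros N HN.
  - exists 1. split; [lra|]. intros x i. apply Fin.case0; exact i.
  - set (Nt := fun u : Vec n => N (vcons 0 u)).
    pose proof (tail_norm n N HN) as HNt. fold Nt in HNt.
    destruct (IHn _ HNt) as [C' [HC' HC'b]].
    destruct (norm_upper n _ HNt) as [K [HK HKb]].
    assert (Hdelta : exists delta, 0 < delta /\ forall u, delta <= N (vcons 1 u)).
    { apply NNPP; intro Hn.
      assert (Hk : forall k:nat, exists u, N (vcons 1 u) < / (INR k + 1)).
      { intro k. apply NNPP; intro Hk. apply Hn. exists (/ (INR k + 1)). split.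
        - pose proof (pos_INR k). apply Rinv_0_lt_compat; lra.
        - intro u. apply Rnot_lt_le. intro. apply Hk. exists u; auto. }
      set (u := fun k => proj1_sig (constructive_indefinite_description _ (Hk k))).
      assert (Hu : forall k, N (vcons 1 (u k)) < / (INR k + 1)).
      { intro k. unfold u. destruct (constructive_indefinite_description _ (Hk k)); auto. }
      assert (Hd : forall k m j, Rabs (u k j - u m j) <= C' * (/ (INR k + 1) + / (INR m + 1))).
      { intros k m j.
        assert (E : vcons 0 (vsub (u k) (u m)) = vsub (vcons 1 (u k)) (vcons 1 (u m))) by vext.
        pose proof (HC'b (vsub (u k) (u m)) j) as H1. unfold Nt in H1. rewrite E in H1.
        pose proof (N_sub_triang N HN (vcons 1 (u k)) (vcons 1 (u m))).
        pose proof (Hu k). pose proof (Hu m).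
        unfold vsub in H1 at 1.
        eapply Rle_trans; [exact H1|]. apply Rmult_le_compat_l; lra. }
      assert (Hc : forall j, Cauchy_crit (fun k => u k j)).
      { intros j eps Heps. destruct (inv_small (eps / (2 * C'))) as [N0 HN0].
        { apply Rdiv_lt_0_compat; lra. }
        exists N0. intros k m Hk1 Hm1. unfold Rdist.
        eapply Rle_lt_trans; [apply Hd|].
        pose proof (inv_mono _ _ Hk1). pose proof (inv_mono _ _ Hm1).
        assert (C' * (/ (INR k + 1) + / (INR m + 1)) <= C' * (2 * / (INR N0 + 1))) by (apply Rmult_le_compat_l; lra).
        assert (C' * (2 * (eps / (2 * C')))= eps) by (field; lra).
        assert (C' * (2 * / (INR N0 + 1)) < C' * (2 * (eps / (2 * C')))) by (apply Rmult_lt_compat_l; lra).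
        lra. }
      set (w := fun j => proj1_sig (R_complete _ (Hc j))).
      assert (Hw : forall j, Un_cv (fun k => u k j) (w j)).
      { intro j. unfold w. destruct (R_complete _ (Hc j)); auto. }
      assert (Hsmall : forall eps, 0 < eps -> N (vcons 1 w) <= eps).
      { intros eps Heps.
        set (e1 := eps / (2 * (K + 1))).
        assert (He1 : 0 < e1) by (unfold e1; apply Rdiv_lt_0_compat; lra).
        destruct (fin_uniform n (fun j k => forall m, (k <= m)%nat -> Rabs (w j - u m j) <= e1)) as [k0 Hk0].
        - intros j k k' Hkk' H m Hm. apply H. lia.
        - intro j. destruct (Hw j e1 He1) as [k0 Hk0]. exists k0. intros m Hm.
          specialize (Hk0 m Hm). unfold Rdist in Hk0. rewrite Rabs_minus_sym. lra.
        - destruct (inv_small (eps/2)) as [k1 Hk1]; [lra|].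
          set (k := Nat.max k0 k1).
          replace (vcons 1 w) with (vadd (vcons 1 (u k)) (vcons 0 (vsub w (u k)))) by vext.
          eapply Rle_trans; [apply (N_triang N HN)|].
          pose proof (HKb (vsub w (u k)) e1 (fun j => Hk0 j k (Nat.le_max_l _ _))) as H1.
          unfold Nt in H1.
          pose proof (Hu k). pose proof (inv_mono k1 k (Nat.le_max_r _ _)).
          assert (K * e1 <= eps / 2).
          { unfold e1. apply Rmult_le_reg_r with (2 * (K+1)); [lra|].
            replace (K * (eps / (2 * (K + 1))) * (2 * (K + 1))) with (K * eps) by (field; lra).
            nra. }
          lra. }
      assert (H0 : N (vcons 1 w) = 0).
      { apply Rle_antisym; [|apply (N_nonneg N HN)].
        apply Rnot_lt_le; intro Hlt. specialize (Hsmall (N (vcons 1 w) / 2)). lra. }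
      apply (N_eq0 N HN) in H0. pose proof (f_equal (fun z => z Fin.F1) H0) as H1.
      cbn in H1. unfold vzero in H1. lra. }
    destruct Hdelta as [delta [Hdp Hdb]].
    set (e0 := N (vcons 1 (@vzero n))).
    assert (He0 : 0 <= e0) by apply (N_nonneg N HN).
    assert (Hx0 : forall x : Vec (S n), Rabs (x Fin.F1) * delta <= N x).
    { intro x. destruct (Req_dec (x Fin.F1) 0) as [Hz|Hz].
      - rewrite Hz, Rabs_R0. pose proof (N_nonneg N HN x). lra.
      - replace x with (vscal (x Fin.F1) (vcons 1 (vscal (/ x Fin.F1) (vtl x)))) at 2 by (vext; field; exact Hz).
        rewrite (N_scal N HN). apply Rmult_le_compat_l; [apply Rabs_pos|apply Hdb]. }
    assert (Ht : forall x : Vec (S n), Nt (vtl x) <= N x * (1 + e0 / delta)).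
    { intro x. unfold Nt.
      replace (vcons 0 (vtl x)) with (vsub x (vscal (x Fin.F1) (vcons 1 vzero))) by vext.
      eapply Rle_trans; [apply (N_sub_triang N HN)|]. rewrite (N_scal N HN).
      pose proof (Hx0 x). fold e0.
      assert (Rabs (x Fin.F1) <= N x / delta) by (apply Rmult_le_reg_r with delta; [lra|]; unfold Rdiv; rewrite Rmult_assoc, Rinv_l; lra).
      assert (Rabs (x Fin.F1) * e0 <= N x / delta * e0) by (apply Rmult_le_compat_r; lra).
      replace (N x * (1 + e0 / delta)) with (N x + N x / delta * e0) by (field; lra). lra. }
    exists (/ delta + C' * (1 + e0 / delta)). split.
    { assert (0 < / delta) by (apply Rinv_0_lt_compat; lra).
      assert (0 <= e0 / delta) by (unfold Rdiv; apply Rmult_le_pos; [lra|left; apply Rinv_0_lt_compat; lra]).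
      assert (0 < C' * (1 + e0 / delta)) by (apply Rmult_lt_0_compat; lra). lra. }
    intros x i. pose proof (N_nonneg N HN x) as HNx.
    assert (A1 : 0 <= C' * (1 + e0 / delta) * N x).
    { apply Rmult_le_pos; [|lra]. apply Rmult_le_pos; [lra|]. assert (0 <= e0/delta) by (unfold Rdiv; apply Rmult_le_pos; [lra|left; apply Rinv_0_lt_compat; lra]). lra. }
    assert (A2 : 0 <= / delta * N x) by (apply Rmult_le_pos; [left; apply Rinv_0_lt_compat; lra|lra]).
    pattern i; apply Fin.caseS'.
    + pose proof (Hx0 x).
      assert (Rabs (x Fin.F1) <= / delta * N x).
      { apply Rmult_le_reg_r with delta; [lra|]. replace (/ delta * N x * delta) with (N x) by (field; lra). lra. }
      rewrite Rmult_plus_distr_r. lra.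
    + intro j. pose proof (HC'b (vtl x) j) as H1. pose proof (Ht x) as H2.
      assert (C' * Nt (vtl x) <= C' * (N x * (1 + e0 / delta))) by (apply Rmult_le_compat_l; lra).
      unfold vtl in H1 at 1. rewrite Rmult_plus_distr_r. nra.
Qed.


Ltac fext := apply functional_extensionality; let i := fresh "i" in intro i;
  unfold vadd, vsub, vscal, vzero; try ring.

Section Dual.
Context {n : nat} (N : Vec n -> R) (HN : is_norm N).

Lemma dual_lub g : is_lub (dual_set N g) (dnorm N g).
Proof.
  unfold dnorm. apply epsilon_spec.
  destruct (norm_lower n N HN) as [C [HC HCb]].
  assert (Hb : bound (dual_set N g)).
  { exists (sumabs n g * C). intros r [x [Hx ->]].
    assert (forall i, Rabs (x i) <= C) by (intro i; specialize (HCb x i); nra).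
    pose proof (pair_bound n g x C H). apply Rabs_le_between in H0 || (unfold Rabs in H0; destruct Rcase_abs in H0); lra. }
  assert (He : exists r, dual_set N g r).
  { exists 0, vzero. rewrite (N_zero N HN), pair_zero_r. split; lra. }
  destruct (completeness _ Hb He) as [m Hm]. exists m; exact Hm.
Qed.

Lemma dnorm_nonneg g : 0 <= dnorm N g.
Proof.
  destruct (dual_lub g) as [H1 _]. apply H1. exists vzero. rewrite (N_zero N HN), pair_zero_r. split; lra.
Qed.

Lemma dual_ub g x : pair n g x <= dnorm N g * N x.
Proof.
  destruct (Req_dec (N x) 0) as [Hz|Hz].
  - apply (N_eq0 N HN) in Hz. subst x. rewrite pair_zero_r, (N_zero N HN). lra.
  - pose proof (N_nonneg N HN x).
    destruct (dual_lub g) as [H1 _].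
    assert (Hin : dual_set N g (pair n g (vscal (/ N x) x))).
    { exists (vscal (/ N x) x). split; [|reflexivity]. rewrite (N_scal N HN), Rabs_pos_eq.
      - rewrite Rinv_l; lra.
      - left; apply Rinv_0_lt_compat; lra. }
    apply H1 in Hin. rewrite pair_scal_r in Hin.
    apply Rmult_le_reg_l with (/ N x); [apply Rinv_0_lt_compat; lra|].
    replace (/ N x * (dnorm N g * N x)) with (dnorm N g) by (field; lra). lra.
Qed.

Lemma dual_lb g x : - (dnorm N g * N x) <= pair n g x.
Proof.
  pose proof (dual_ub g (vscal (-1) x)). rewrite pair_scal_r, (N_scal N HN), Rabs_m1 in H. lra.
Qed.

Lemma dnorm_pos g : g <> vzero -> 0 < dnorm N g.
Proof.
  intro Hg. assert (HNg : 0 < N g).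
  { destruct (N_nonneg N HN g) as [H|H]; [exact H|]. symmetry in H. apply (N_eq0 N HN) in H. contradiction. }
  assert (Hp : 0 < pair n g g).
  { destruct (pair_self_nonneg n g) as [H|H]; [exact H|]. symmetry in H. apply pair_self_zero in H. contradiction. }
  pose proof (dual_ub g g).
  assert (0 < dnorm N g * N g) by lra.
  pose proof (dnorm_nonneg g). destruct H1 as [H1|H1]; [exact H1|]. rewrite <- H1 in H0. lra.
Qed.

Lemma dir_nonneg F g y w : has_gradient N F g y ->
  (forall t, 0 < t <= 1 -> F y <= F (vadd y (vscal t w))) -> 0 <= pair n g w.
Proof.
  intros Hg Hmin. apply Rnot_lt_le. intro Hp.
  destruct (Req_dec (N w) 0) as [Hz|Hz].
  - apply (N_eq0 N HN) in Hz. subst w. rewrite pair_zero_r in Hp. lra.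
  - pose proof (N_nonneg N HN w) as Hw.
    set (p := pair n g w) in *.
    destruct (Hg (- p / (2 * N w))) as [delta [Hd Hdb]].
    { apply Rdiv_lt_0_compat; lra. }
    set (t := Rmin 1 (delta / (2 * N w))).
    assert (Ht0 : 0 < t) by (unfold t; apply Rmin_pos; [lra| apply Rdiv_lt_0_compat; lra]).
    assert (Ht1 : t <= 1) by apply Rmin_l.
    assert (Ht2 : t <= delta / (2 * N w)) by apply Rmin_r.
    assert (HNt : N (vscal t w) = t * N w) by (rewrite (N_scal N HN), Rabs_pos_eq; lra).
    assert (Hlt : N (vscal t w) < delta).
    { rewrite HNt. apply Rle_lt_trans with (delta / (2 * N w) * N w).
      - apply Rmult_le_compat_r; lra.
      - replace (delta / (2 * N w) * N w) with (delta / 2) by (field; lra). lra. }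
    specialize (Hdb _ Hlt). rewrite pair_scal_r, HNt in Hdb. fold p in Hdb.
    specialize (Hmin t (conj Ht0 Ht1)).
    apply Rabs_le_between in Hdb || (unfold Rabs in Hdb; destruct Rcase_abs in Hdb).
    all: try (replace (- p / (2 * N w) * (t * N w)) with (- p * t / 2) in Hdb by (field; lra)); nra.
Qed.

Lemma line_deriv F gF y w t : (forall p, has_gradient N F (gF p) p) ->
  derivable_pt_lim (fun s => F (vadd y (vscal s w))) t (pair n (gF (vadd y (vscal t w))) w).
Proof.
  intros Hg eps Heps.
  set (p := vadd y (vscal t w)).
  pose proof (N_nonneg N HN w) as Hw.
  destruct (Hg p (eps / (2 * (N w + 1)))) as [delta [Hd Hdb]].
  { apply Rdiv_lt_0_compat; lra. }
  assert (Hd' : 0 < delta / (N w + 1)) by (apply Rdiv_lt_0_compat; lra).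
  exists (mkposreal _ Hd'). intros hh Hh0 Hhd. simpl in Hhd.
  assert (E : vadd y (vscal (t + hh) w) = vadd p (vscal hh w)) by (unfold p; fext).
  rewrite E. fold p.
  assert (Hlt : N (vscal hh w) < delta).
  { rewrite (N_scal N HN). apply Rle_lt_trans with (Rabs hh * (N w + 1)).
    - pose proof (Rabs_pos hh). nra.
    - apply Rmult_lt_reg_r with (/ (N w + 1)). apply Rinv_0_lt_compat; lra.
      replace (Rabs hh * (N w + 1) * / (N w + 1)) with (Rabs hh) by (field; lra). exact Hhd. }
  specialize (Hdb _ Hlt). rewrite pair_scal_r, (N_scal N HN) in Hdb.
  assert (Hha : 0 < Rabs hh) by (apply Rabs_pos_lt; exact Hh0).
  replace ((F (vadd p (vscal hh w)) - F p) / hh - pair n (gF p) w)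
    with ((F (vadd p (vscal hh w)) - F p - hh * pair n (gF p) w) / hh) by (field; exact Hh0).
  unfold Rdiv at 1. rewrite Rabs_mult, Rabs_inv.
  apply Rmult_lt_reg_r with (Rabs hh); [exact Hha|].
  rewrite Rmult_assoc, Rinv_l by lra. rewrite Rmult_1_r.
  eapply Rle_lt_trans; [exact Hdb|].
  replace (eps / (2 * (N w + 1)) * (Rabs hh * N w)) with (Rabs hh * (eps * (N w / (2 * (N w + 1))))) by (field; lra).
  replace (eps * Rabs hh) with (Rabs hh * eps) by ring.
  apply Rmult_lt_compat_l; [exact Hha|].
  assert (N w / (2 * (N w + 1)) < 1).
  { apply Rmult_lt_reg_r with (2 * (N w + 1)); [lra|]. unfold Rdiv. rewrite Rmult_assoc, Rinv_l by lra. lra. }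
  assert (0 <= N w / (2 * (N w + 1))) by (unfold Rdiv; apply Rmult_le_pos; [lra|left; apply Rinv_0_lt_compat; lra]).
  nra.
Qed.

Lemma descent L f gf y w : L_smooth N L f gf ->
  f (vadd y w) <= f y + pair n (gf y) w + L / 2 * (N w) ^ 2.
Proof.
  intros [HL [[Hg _] Hlip]].
  set (c0 := pair n (gf y) w).
  set (k := L / 2 * (N w) ^ 2).
  set (phi1 := fun s => f (vadd y (vscal s w))).
  set (phi2 := (mult_real_fct c0 id + mult_real_fct k (fun s => s ^ 2))%F).
  assert (Hd : forall t, derivable_pt_lim (phi1 - phi2)%F t
     (pair n (gf (vadd y (vscal t w))) w - (c0 * 1 + k * (INR 2 * t ^ Init.Nat.pred 2)))).
  { intro t. apply derivable_pt_lim_minus.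
    - apply line_deriv; exact Hg.
    - apply derivable_pt_lim_plus; apply derivable_pt_lim_scal; [apply derivable_pt_lim_id|apply derivable_pt_lim_pow]. }
  set (pr := fun t => exist _ _ (Hd t) : derivable_pt (phi1 - phi2)%F t).
  destruct (MVT_cor1 (phi1 - phi2)%F 0 1 pr Rlt_0_1) as [c [Hc Hc01]].
  simpl in Hc.
  unfold minus_fct, plus_fct, mult_real_fct, phi1, id in Hc.
  replace (vadd y (vscal 1 w)) with (vadd y w) in Hc by fext.
  replace (vadd y (vscal 0 w)) with y in Hc by fext.
  assert (Hder : pair n (gf (vadd y (vscal c w))) w - c0 <= 2 * k * c).
  { unfold c0. rewrite <- pair_sub_l.
    eapply Rle_trans; [apply dual_ub|].
    pose proof (Hlip (vadd y (vscal c w)) y).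
    replace (vsub (vadd y (vscal c w)) y) with (vscal c w) in H by fext.
    rewrite (N_scal N HN), (Rabs_pos_eq c) in H by (destruct Hc01; lra).
    pose proof (N_nonneg N HN w).
    unfold k. replace (2 * (L / 2 * N w ^ 2) * c) with (L * (c * N w) * N w) by field.
    apply Rmult_le_compat_r; lra. }
  unfold phi2, plus_fct, mult_real_fct, id, k in *. simpl in Hc. nra.
Qed.
End Dual.



Section Psi.
Context {n : nat} (N : Vec n -> R) (HN : is_norm N)
  (d : Vec n -> R) (gd : Vec n -> Vec n) (f : Vec n -> R) (gf : Vec n -> Vec n)
  (x0 : Vec n) (a : nat -> R) (y : nat -> Vec n).

Fixpoint Gpsi (k : nat) (z : Vec n) : Vec n :=
  match k with
  | O => vsub (gd z) (gd x0)
  | S j => vadd (Gpsi j z) (vscal (a (S j)) (gf (y j)))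
  end.

Lemma psi_ident k : forall z u,
  psi d gd f gf x0 a y k z - psi d gd f gf x0 a y k u - pair n (Gpsi k u) (vsub z u)
  = d z - d u - pair n (gd u) (vsub z u).
Proof.
  induction k; intros z u; simpl.
  - unfold bregman. rewrite !pair_sub_l, !pair_sub_r. ring.
  - specialize (IHk z u). rewrite !pair_add_l, !pair_scal_l, !pair_sub_r in *. lra.
Qed.

Lemma psi_grad k u : has_gradient N d (gd u) u -> has_gradient N (psi d gd f gf x0 a y k) (Gpsi k u) u.
Proof.
  intros Hg eps Heps. destruct (Hg eps Heps) as [delta [Hd Hb]]. exists delta. split; [exact Hd|].
  intros hh Hh. specialize (Hb hh Hh). pose proof (psi_ident k (vadd u hh) u) as E.
  replace (vsub (vadd u hh) u) with hh in E by fext. rewrite E. exact Hb.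
Qed.

Lemma psi_strong k v : prox_function N d gd ->
  (forall z, psi d gd f gf x0 a y k v <= psi d gd f gf x0 a y k z) ->
  forall z, psi d gd f gf x0 a y k v + / 2 * (N (vsub z v)) ^ 2 <= psi d gd f gf x0 a y k z.
Proof.
  intros [[Hg _] [_ [Hsc _]]] Hmin z.
  assert (H0 : 0 <= pair n (Gpsi k v) (vsub z v)).
  { apply (dir_nonneg N HN (psi d gd f gf x0 a y k) _ v); [apply psi_grad, Hg|].
    intros t _. apply Hmin. }
  pose proof (psi_ident k z v). pose proof (Hsc v z). lra.
Qed.
End Psi.

Lemma growth (L A a k : R) : 0 < L -> 0 <= k -> k ^ 2 / (4 * L) <= A -> 0 < a -> A + a <= L * a ^ 2 ->
  (k + 1) ^ 2 / (4 * L) <= A + a.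
Proof.
  intros HL Hk HA Ha Hq.
  assert (H1 : k ^ 2 <= 4 * L * A).
  { apply Rmult_le_compat_l with (r := 4 * L) in HA; [|lra].
    replace (4 * L * (k ^ 2 / (4 * L))) with (k ^ 2) in HA by (field; lra). exact HA. }
  set (u := 2 * L * a).
  assert (Hu : 0 < u) by (unfold u; nra).
  assert (H2 : 4 * L * (A + a) <= u ^ 2) by (unfold u; nra).
  assert (H3 : 4 * L * (A + a) = 4 * L * A + 2 * u) by (unfold u; ring).
  assert (H4 : 2 <= u) by nra.
  assert (H5 : k <= u - 1) by nra.
  apply Rmult_le_reg_l with (4 * L); [lra|].
  replace (4 * L * ((k + 1) ^ 2 / (4 * L))) with ((k + 1) ^ 2) by (field; lra).
  nra.
Qed.



Lemma sharp_descent {n} (N : Vec n -> R) (HN : is_norm N) sharp L f gf y0 :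
  is_sharp N sharp -> L_smooth N L f gf ->
  f (vsub y0 (vscal (dnorm N (gf y0) / L) (sharp (gf y0))))
   <= f y0 - dnorm N (gf y0) ^ 2 / (2 * L).
Proof.
  intros Hs HL. pose proof HL as [HL0 _].
  set (G := dnorm N (gf y0)). set (s := sharp (gf y0)).
  destruct (Hs (gf y0)) as [Hs1 Hs2]. fold s G in Hs1, Hs2.
  pose proof (dnorm_nonneg N HN (gf y0)). fold G in H.
  replace (vsub y0 (vscal (G / L) s)) with (vadd y0 (vscal (- (G / L)) s)) by fext.
  eapply Rle_trans; [apply (descent N HN L f gf y0 _ HL)|].
  rewrite pair_scal_r, Hs2, (N_scal N HN), Rabs_Ropp, Rabs_pos_eq.
  2: { unfold Rdiv; apply Rmult_le_pos; [lra|left; apply Rinv_0_lt_compat; lra]. }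
  pose proof (N_nonneg N HN s).
  assert (Hq : (G / L * N s) ^ 2 <= (G / L) ^ 2).
  { assert (0 <= G / L) by (unfold Rdiv; apply Rmult_le_pos; [lra|left; apply Rinv_0_lt_compat; lra]).
    assert (G / L * N s <= G / L * 1) by (apply Rmult_le_compat_l; lra).
    apply pow_incr; split; [apply Rmult_le_pos; lra|lra]. }
  assert (H2 : L / 2 * (G / L * N s) ^ 2 <= L / 2 * (G / L) ^ 2) by (apply Rmult_le_compat_l; lra).
  replace (L / 2 * (G / L) ^ 2) with (G ^ 2 / (2 * L)) in H2 by (field; lra).
  assert (- (G / L) * G = - 2 * (G ^ 2 / (2 * L))) by (field; lra).
  lra.
Qed.

Theorem mainTheorem1 (n : nat) (N : Vec n -> R) (sharp : Vec n -> Vec n) (L : R)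
  (f : Vec n -> R) (gf : Vec n -> Vec n) (d : Vec n -> R) (gd : Vec n -> Vec n)
  (opt : step_option) (x0 : Vec n)
  (x v y : nat -> Vec n) (beta h a A : nat -> R) :
  is_norm N ->
  is_sharp N sharp ->
  prox_function N d gd ->
  L_smooth N L f gf ->
  AGMsDR_iterates N sharp L f gf d gd opt x0 x v y beta h a A ->
  (forall k, gf (y k) <> vzero) ->
  forall k : nat,
    A k * f (x k) <= psi d gd f gf x0 a y k (v k) /\
    (forall z, psi d gd f gf x0 a y k (v k) <= psi d gd f gf x0 a y k z) /\
    (INR k) ^ 2 / (4 * L) <= A k.
Proof.
  intros HN Hs Hd HL Hit Hg0.
  pose proof HL as [HL0 [[Hgf _] _]].
  pose proof Hd as [_ [_ [Hsc _]]].
  destruct Hit as [Hx0 [Hv0 [HA0 Hstep]]].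
  set (P := psi d gd f gf x0 a y).
  assert (Hmin : forall k z, P k (v k) <= P k z).
  { intros [|k] z.
    - unfold P; simpl. rewrite Hv0. unfold bregman.
      replace (vsub x0 x0) with (@vzero n) by fext. rewrite pair_zero_r.
      pose proof (Hsc x0 z). pose proof (N_nonneg N HN (vsub z x0)).
      assert (0 <= / 2 * N (vsub z x0) ^ 2) by (apply Rmult_le_pos; [lra|apply pow2_ge_0]). lra.
    - destruct (Hstep k) as [_ [_ [_ H]]]. apply H. }
  assert (Main : forall k, A k * f (x k) <= P k (v k) /\ INR k ^ 2 / (4 * L) <= A k).
  { induction k as [|k [IH1 IH2]].
    - unfold P; simpl. rewrite HA0. split; [|unfold Rdiv; lra].
      rewrite Hv0. unfold bregman. replace (vsub x0 x0) with (@vzero n) by fext. rewrite pair_zero_r. lra.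
    - destruct (Hstep k) as [[Hb01 [Hbmin Hy]] [Hopt [HAS _]]].
      set (g := gf (y k)). set (G := dnorm N g). set (aa := a (S k)). set (AA := A k).
      assert (HAA : 0 <= AA).
      { unfold AA. eapply Rle_trans; [|exact IH2].
        unfold Rdiv. apply Rmult_le_pos; [apply pow2_ge_0|left; apply Rinv_0_lt_compat; lra]. }
      assert (HG : 0 < G) by (apply (dnorm_pos N HN); apply Hg0).
      assert (F1 : f (y k) <= f (x k)).
      { rewrite Hy. replace (x k) with (vadd (v k) (vscal 1 (vsub (x k) (v k)))) at 2 by fext.
        apply Hbmin; lra. }
      assert (F2 : 0 <= pair n g (vsub (v k) (y k))).
      { apply (dir_nonneg N HN f g (y k)); [apply Hgf|].
        intros t Ht.
        replace (vadd (y k) (vscal t (vsub (v k) (y k)))) with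
          (vadd (v k) (vscal (beta k * (1 - t)) (vsub (x k) (v k)))) by (rewrite Hy; fext).
        rewrite Hy. apply Hbmin. split; nra. }
      assert (F4 : 0 < aa /\ 0 < AA + aa /\ AA + aa <= L * aa ^ 2 /\
                   (AA + aa) * f (x (S k)) <= (AA + aa) * f (y k) - aa ^ 2 * G ^ 2 / 2).
      { pose proof (sharp_descent N HN sharp L f gf (y k) Hs HL) as SD. fold g G in SD.
        destruct opt.
        - destruct Hopt as [Hmod [Hap Heq]]. fold aa AA in Hap, Heq.
          assert (HAp : 0 < AA + aa) by lra.
          assert (Heq2 : L * aa ^ 2 = AA + aa).
          { apply Rmult_eq_compat_r with (r := (AA + aa) * L) in Heq.
            replace (aa ^ 2 / (AA + aa) * ((AA + aa) * L)) with (L * aa ^ 2) in Heq by (field; lra).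
            rewrite Heq. field. lra. }
          split; [exact Hap|]. split; [exact HAp|]. split; [lra|].
          assert (Hx1 : f (x (S k)) <= f (y k) - G ^ 2 / (2 * L)).
          { pose proof (descent N HN L f gf (y k) (vsub (x (S k)) (y k)) HL) as D1.
            replace (vadd (y k) (vsub (x (S k)) (y k))) with (x (S k)) in D1 by fext.
            set (zs := vsub (y k) (vscal (G / L) (sharp g))).
            specialize (Hmod zs). fold g in Hmod, D1.
            destruct (Hs g) as [Hs1 Hs2]. fold G in Hs2.
            assert (E : vsub zs (y k) = vscal (- (G / L)) (sharp g)) by (unfold zs; fext).
            rewrite E, pair_scal_r, Hs2, (N_scal N HN), Rabs_Ropp, Rabs_pos_eq in Hmod.
            2: { unfold Rdiv; apply Rmult_le_pos; [lra|left; apply Rinv_0_lt_compat; lra]. }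
            pose proof (N_nonneg N HN (sharp g)).
            assert (0 <= G / L) by (unfold Rdiv; apply Rmult_le_pos; [lra|left; apply Rinv_0_lt_compat; lra]).
            assert (Hq : (G / L * N (sharp g)) ^ 2 <= (G / L) ^ 2).
            { assert (G / L * N (sharp g) <= G / L * 1) by (apply Rmult_le_compat_l; lra).
              apply pow_incr; split; [apply Rmult_le_pos; lra|lra]. }
            assert (H2 : L / 2 * (G / L * N (sharp g)) ^ 2 <= L / 2 * (G / L) ^ 2) by (apply Rmult_le_compat_l; lra).
            replace (L / 2 * (G / L) ^ 2) with (G / L * G - G ^ 2 / (2 * L)) in H2 by (field; lra).
            lra. }
          apply Rmult_le_compat_l with (r := AA + aa) in Hx1; [|lra].
          replace ((AA + aa) * (f (y k) - G ^ 2 / (2 * L))) with ((AA + aa) * f (y k) - (AA + aa) / L * G ^ 2 / 2) in Hx1 by (field; lra).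
          replace ((AA + aa) / L) with (aa ^ 2) in Hx1 by (rewrite <- Heq2; field; lra).
          exact Hx1.
        - destruct Hopt as [[Hh0 [Hhmin Hx1]] [Hne [Heq Hlarge]]]. fold g in Hhmin, Hx1, Heq, Hlarge.
          fold G aa AA in Heq, Hlarge, Hne.
          assert (HGL : 0 <= G / L) by (unfold Rdiv; apply Rmult_le_pos; [lra|left; apply Rinv_0_lt_compat; lra]).
          assert (Hfx : f (x (S k)) <= f (y k) - G ^ 2 / (2 * L)).
          { rewrite Hx1. eapply Rle_trans; [apply Hhmin; exact HGL|]. exact SD. }
          set (D := f (y k) - f (x (S k))).
          assert (HD : G ^ 2 / (2 * L) <= D) by (unfold D; lra).
          assert (HG2 : 0 < G ^ 2) by nra.
          assert (HDp : 0 < D).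
          { eapply Rlt_le_trans; [|exact HD]. apply Rdiv_lt_0_compat; lra. }
          set (q := aa ^ 2 / (2 * (AA + aa))).
          assert (Hq : q * G ^ 2 = D) by (unfold D, q; lra).
          assert (Hqa : q * (2 * (AA + aa)) = aa ^ 2) by (unfold q; field; exact Hne).
          assert (Hqp : 0 < q) by nra.
          assert (HAp : 0 < AA + aa).
          { destruct (Rle_or_lt (AA + aa) 0) as [Hle|]; [|assumption].
            destruct Hle as [Hlt|Heq0]; [|contradiction]. nra. }
          assert (Hq2 : 1 / (2 * L) <= q).
          { apply Rmult_le_reg_r with (G ^ 2); [exact HG2|].
            replace (1 / (2 * L) * G ^ 2) with (G ^ 2 / (2 * L)) by (field; lra). lra. }
          assert (HLq : AA + aa <= L * aa ^ 2).
          { rewrite <- Hqa.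
            assert (1 <= 2 * L * q).
            { apply Rmult_le_compat_l with (r := 2 * L) in Hq2; [|lra].
              replace (2 * L * (1 / (2 * L))) with 1 in Hq2 by (field; lra). lra. }
            nra. }
          assert (Hap : 0 < aa).
          { apply Rnot_le_lt. intro Hle.
            set (s := 2 * D / G ^ 2).
            assert (Hs0 : 0 < s) by (unfold s; apply Rdiv_lt_0_compat; lra).
            assert (HsD : s * G ^ 2 = 2 * D) by (unfold s; field; lra).
            set (a2 := s - aa).
            assert (Ha2 : 0 < AA + a2) by (unfold a2; lra).
            assert (Hkey : aa ^ 2 = s * (AA + aa)).
            { apply Rmult_eq_reg_r with (G ^ 2); [|lra].
              rewrite <- Hqa. replace (s * (AA + aa) * G ^ 2) with ((s * G ^ 2) * (AA + aa)) by ring.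
              rewrite HsD, <- Hq. ring. }
            assert (Hsol : f (y k) - a2 ^ 2 / (2 * (AA + a2)) * G ^ 2 = f (x (S k))).
            { assert (a2 ^ 2 = s * (AA + a2)) by (unfold a2; nra).
              replace (a2 ^ 2 / (2 * (AA + a2)) * G ^ 2) with (s * G ^ 2 / 2).
              - rewrite HsD. unfold D. field.
              - rewrite H. field. lra. }
            specialize (Hlarge a2 ltac:(lra) Hsol). unfold a2 in Hlarge. lra. }
          split; [exact Hap|]. split; [exact HAp|]. split; [exact HLq|].
          assert (E : (AA + aa) * (aa ^ 2 / (2 * (AA + aa)) * G ^ 2) = aa ^ 2 * G ^ 2 / 2) by (field; lra).
          rewrite <- Heq. rewrite Rmult_minus_distr_l, E. lra. }
      destruct F4 as [Hap [HAp [HLq Hfx]]].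
      assert (HAS' : A (S k) = AA + aa) by exact HAS.
      split.
      + rewrite HAS'. unfold P. simpl. fold P.
        fold g aa.
        pose proof (psi_strong N HN d gd f gf x0 a y k (v k) Hd (Hmin k) (v (S k))) as PS.
        fold P in PS.
        set (t := N (vsub (v (S k)) (v k))).
        pose proof (dual_lb N HN g (vsub (v (S k)) (v k))) as DL. fold G t in DL.
        assert (Esplit : pair n g (vsub (v (S k)) (y k)) = pair n g (vsub (v (S k)) (v k)) + pair n g (vsub (v k) (y k)))
          by (rewrite !pair_sub_r; ring).
        rewrite Esplit.
        assert (Hsq : - (aa ^ 2 * G ^ 2 / 2) <= / 2 * t ^ 2 - aa * (G * t)) by (pose proof (pow2_ge_0 (t - aa * G)); nra).
        assert (AA * f (y k) <= AA * f (x k)) by (apply Rmult_le_compat_l; lra).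
        assert (aa * (- (G * t)) <= aa * pair n g (vsub (v (S k)) (v k))) by (apply Rmult_le_compat_l; lra).
        assert (0 <= aa * pair n g (vsub (v k) (y k))) by (apply Rmult_le_pos; lra).
        fold AA in IH1. fold t in PS. rewrite !Rmult_plus_distr_l. lra.
      + rewrite HAS', S_INR. apply growth; try lra; [apply pos_INR|exact IH2]. }
  intro k. destruct (Main k) as [M1 M2]. split; [exact M1|]. split; [apply Hmin|exact M2].
Qed.
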